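(* Let $n\ge 2d$. The cone $\Sigma^{S'}_{n,2d}$ of symmetric forms that are sums of squares of forms in $T$ is full-dimensional in $\mathbb{R}^{\pi(2d)}$ (identified with the space $H^S_{n,2d}$ of symmetric forms of degree $2d$ in $n$ variables via coefficients in the basis $\{p^{(n)}_\lambda:\lambda\vdash 2d\}$).
   Context: $p^{(n)}_i=\frac1n(x_1^i+\dots+x_n^i)$, $p^{(n)}_\lambda=\prod_i p^{(n)}_{\lambda_i}$; $\pi(k)$ is the number of partitions of $k$. $H_{n,d}$ is the space of real forms of degree $d$ in $n$ variables, $H^S_{n,k}$ the symmetric forms of degree $k$; $\mathcal{S}_n$ acts by permuting variables. $T\subseteq H_{n,d}$ is the $\mathcal{S}_n$-submodule generated by $H^S_{n,d}$ together with all forms $(x_1^a-x_2^a)g$ with $a\in\{1,\dots,d\}$ and $g\in H^S_{n,d-a}$. *)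

(* Defs.v *)
From HB Require Import structures.
From mathcomp Require Import all_boot all_order all_algebra all_fingroup.
From mathcomp Require Import mpoly.
Set Implicit Arguments. Unset Strict Implicit. Unset Printing Implicit Defensive.
Import Order.TTheory GRing.Theory Num.Theory.
Local Open Scope ring_scope.

(* Variables are indexed x_1..x_n  ~  'X_i with i : 'I_n (x_1 = 'X_0, x_2 = 'X_1). *)

Definition symform (R : ringType) (n k : nat) (f : {mpoly R[n]}) : Prop :=
  f \is symmetric /\ f \is k.-homog.

Definition T_gen (R : ringType) (n d : nat) (f : {mpoly R[n]}) : Prop :=
  symform d f \/
  exists (a : nat) (i1 i2 : 'I_n) (g : {mpoly R[n]}),
    [/\ (1 <= a <= d)%N, val i1 = 0%N, val i2 = 1%N, symform (d - a) g &
        f = ('X_i1 ^+ a - 'X_i2 ^+ a) * g].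

(* T: the S_n-submodule of H_{n,d} generated by T_gen, i.e. the R-linear span
   of all permuted generators  s . g  (s in S_n). *)
Definition in_T (R : ringType) (n d : nat) (f : {mpoly R[n]}) : Prop :=
  exists s : seq (R * 'S_n * {mpoly R[n]}),
    (forall t, t \in s -> T_gen d t.2) /\
    f = \sum_(t <- s) t.1.1 *: msym t.1.2 t.2.

Definition in_SigmaS' (R : ringType) (n d : nat) (f : {mpoly R[n]}) : Prop :=
  symform (2 * d) f /\
  exists qs : seq {mpoly R[n]},
    (forall q, q \in qs -> in_T d q) /\ f = \sum_(q <- qs) q ^+ 2.

(* A cone C inside H^S_{n,2d} is full-dimensional iff its linear span is all of
   H^S_{n,2d}: every symmetric form of degree 2d is a finite linear combination
   of elements of C. *)
Definition full_dim_in_HS (R : ringType) (n k : nat) (C : {mpoly R[n]} -> Prop)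
  : Prop :=
  forall f : {mpoly R[n]}, symform k f ->
    exists s : seq (R * {mpoly R[n]}),
      (forall t, t \in s -> C t.2) /\ f = \sum_(t <- s) t.1 *: t.2.

(* Main.v *)
Require Import Defs.
From HB Require Import structures.
From mathcomp Require Import all_boot all_order all_algebra all_fingroup.
From mathcomp Require Import mpoly.
From mathcomp Require Import ring zify.
Set Implicit Arguments. Unset Strict Implicit. Unset Printing Implicit Defensive.
Import Order.TTheory GRing.Theory Num.Theory.
Local Open Scope ring_scope.
Section Span.
Variables (R : realFieldType) (n : nat).
Implicit Types (P Q S : {mpoly R[n]} -> Prop) (f g : {mpoly R[n]}).

Definition spanP P f := exists s : seq (R * {mpoly R[n]}),
  (forall t, t \in s -> P t.2) /\ f = \sum_(t <- s) t.1 *: t.2.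

Lemma span_gen P f : P f -> spanP P f.
Proof.
move=> Pf; exists [:: (1, f)]; split; first by move=> t; rewrite inE => /eqP ->.
by rewrite big_seq1 scale1r.
Qed.

Lemma span0 P : spanP P 0.
Proof. by exists [::]; split => // ; rewrite big_nil. Qed.

Lemma spanD P f g : spanP P f -> spanP P g -> spanP P (f + g).
Proof.
move=> [s1 [H1 ->]] [s2 [H2 ->]]; exists (s1 ++ s2); split; last by rewrite big_cat.
by move=> t; rewrite mem_cat => /orP [/H1|/H2].
Qed.

Lemma spanZ P c f : spanP P f -> spanP P (c *: f).
Proof.
move=> [s [H ->]]; exists [seq (c * t.1, t.2) | t <- s]; split.
  by move=> t /mapP [u us ->] /=; apply: H.
by rewrite big_map scaler_sumr; apply: eq_bigr => t _; rewrite scalerA.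
Qed.

Lemma spanN P f : spanP P f -> spanP P (- f).
Proof. by move=> h; rewrite -scaleN1r; apply: spanZ. Qed.

Lemma spanB P f g : spanP P f -> spanP P g -> spanP P (f - g).
Proof. by move=> h1 h2; apply: spanD => //; apply: spanN. Qed.

Lemma span_sum P (I : eqType) (r : seq I) (F : I -> {mpoly R[n]}) :
  (forall i, i \in r -> spanP P (F i)) -> spanP P (\sum_(i <- r) F i).
Proof.
elim: r => [|i r IH] H; first by rewrite big_nil; apply: span0.
rewrite big_cons; apply: spanD; first by apply: H; rewrite inE eqxx.
by apply: IH => j jr; apply: H; rewrite inE jr orbT.
Qed.

Lemma span_trans P Q f : (forall g, P g -> spanP Q g) -> spanP P f -> spanP Q f.
Proof.
move=> PQ [s [H ->]]; apply: span_sum => t ts; apply: spanZ; exact: PQ (H t ts).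
Qed.

Lemma spanM P Q S f g : (forall a b, P a -> Q b -> spanP S (a * b)) ->
  spanP P f -> spanP Q g -> spanP S (f * g).
Proof.
move=> PQ [s1 [H1 ->]] [s2 [H2 ->]]; rewrite mulr_suml; apply: span_sum => t ts.
rewrite mulr_sumr; apply: span_sum => u us.
rewrite -scalerAl -scalerAr; apply: spanZ; apply: spanZ; apply: PQ.
  exact: H1. exact: H2.
Qed.

End Span.
Section TPart.
Variables (R : realFieldType) (n d : nat).
Local Notation mp := {mpoly R[n]}.
Local Notation inT := (@in_T R n d).

Lemma msymXi (s : 'S_n) (i : 'I_n) : msym s ('X_i : mp) = 'X_(s i).
Proof. by rewrite /msym mmapX mmap1U. Qed.

Lemma msymXn (s : 'S_n) (i : 'I_n) k : msym s ('X_i ^+ k : mp) = 'X_(s i) ^+ k.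
Proof. by rewrite rmorphXn /= msymXi. Qed.

Lemma inT_gen g : T_gen d g -> inT g.
Proof.
move=> Hg; exists [:: (1, 1%g, g)]; split; first by move=> t; rewrite inE => /eqP ->.
by rewrite big_seq1 /= msym1m scale1r.
Qed.

Lemma inT0 : inT (0 : mp).
Proof. by exists [::]; split => //; rewrite big_nil. Qed.

Lemma inTD f g : inT f -> inT (g : mp) -> inT (f + g).
Proof.
move=> [s1 [H1 ->]] [s2 [H2 ->]]; exists (s1 ++ s2); split; last by rewrite big_cat.
by move=> t; rewrite mem_cat => /orP [/H1|/H2].
Qed.

Lemma inTZ c (f : mp) : inT f -> inT (c *: f).
Proof.
move=> [s [H ->]]; exists [seq (c * t.1.1, t.1.2, t.2) | t <- s]; split.
  by move=> t /mapP [u us ->] /=; apply: H.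
by rewrite big_map scaler_sumr; apply: eq_bigr => t _; rewrite scalerA.
Qed.

Lemma inTN (f : mp) : inT f -> inT (- f).
Proof. by move=> h; rewrite -scaleN1r; apply: inTZ. Qed.

Lemma inT_sum (I : eqType) (r : seq I) (F : I -> mp) :
  (forall i, i \in r -> inT (F i)) -> inT (\sum_(i <- r) F i).
Proof.
elim: r => [|i r IH] H; first by rewrite big_nil; apply: inT0.
rewrite big_cons; apply: inTD; first by apply: H; rewrite inE eqxx.
by apply: IH => j jr; apply: H; rewrite inE jr orbT.
Qed.

Lemma inT_msym (s : 'S_n) (f : mp) : inT f -> inT (msym s f).
Proof.
move=> [r [H ->]]; exists [seq (t.1.1, (t.1.2 * s)%g, t.2) | t <- r]; split.
  by move=> t /mapP [u us ->] /=; apply: H.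
rewrite big_map raddf_sum; apply: eq_bigr => t _ /=.
by rewrite msymZ msymMm.
Qed.

Definition pw k : mp := \sum_(i < n) 'X_i ^+ k.

Lemma sym_sumF (F : 'I_n -> mp) : (forall s i, msym s (F i) = F (s i)) ->
  \sum_(i < n) F i \is symmetric.
Proof.
move=> HF; apply/issymP => s; rewrite raddf_sum /=.
under eq_bigr do rewrite HF.
by rewrite [RHS](reindex_inj (@perm_inj _ s)).
Qed.

Lemma pw_sym k : pw k \is symmetric.
Proof. by apply: sym_sumF => s i; rewrite msymXn. Qed.

Lemma Xn_homog (i : 'I_n) k : ('X_i ^+ k : mp) \is k.-homog.
Proof.
have h1 : ('X_i : mp) \is 1.-homog by rewrite dhomogX; apply/eqP; exact: mdeg1.
by have := dhomogMn k h1; rewrite mul1n.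
Qed.

Lemma pw_homog k : pw k \is k.-homog.
Proof. by apply: rpred_sum => i _; apply: Xn_homog. Qed.

Lemma XG_homog (i : 'I_n) a (G : mp) : (a <= d)%N -> G \is (d - a).-homog ->
  'X_i ^+ a * G \is d.-homog.
Proof.
by move=> ad hG; have := dhomogM (Xn_homog i a) hG; rewrite subnKC.
Qed.

Lemma X0G (i0 i1 : 'I_n) a (G : mp) : val i0 = 0%N -> val i1 = 1%N ->
  (1 <= a <= d)%N -> symform (d - a) G -> inT ('X_i0 ^+ a * G).
Proof.
move=> v0 v1 had [sG hG].
have ne01 : i0 != i1 by apply/eqP => /(congr1 val); rewrite v0 v1.
set D := ('X_i0 ^+ a - 'X_i1 ^+ a) * G.
have TD : inT D by apply: inT_gen; right; exists a, i0, i1, G.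
have Dj j : j != i0 -> msym (tperm i1 j) D = ('X_i0 ^+ a - 'X_j ^+ a) * G.
  move=> nj; rewrite /D msymM msymB !msymXn tpermL tpermD //; last by rewrite eq_sym.
  by move/issymP: sG => ->.
have nz : (n%:R : R) != 0.
  by rewrite pnatr_eq0 -lt0n; apply: leq_ltn_trans (ltn_ord i1).
have E : 'X_i0 ^+ a * G = (n%:R)^-1 *:
   (\sum_(j < n | j != i0) msym (tperm i1 j) D + pw a * G).
  under eq_bigr => j hj do rewrite Dj //.
  rewrite big_mkcond /=.
  have -> : \sum_(i < n) (if i != i0 then ('X_i0 ^+ a - 'X_i ^+ a) * G else 0)
      = \sum_(i < n) ('X_i0 ^+ a - 'X_i ^+ a) * G.
    by apply: eq_bigr => j _; case: eqP => // ->; rewrite subrr mul0r.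
  rewrite -mulr_suml sumrB sumr_const card_ord /pw mulrBl addrNK.
  by rewrite mulrnAl -scaler_nat scalerA mulVf // scale1r.
rewrite E; apply: inTZ; apply: inTD.
  rewrite big_mkcond; apply: inT_sum => j _; case: ifP => _; last exact: inT0.
  exact: inT_msym.
apply: inT_gen; left; split; first by apply: rpredM => //; apply: pw_sym.
by have := dhomogM (pw_homog a) hG; rewrite subnKC //; case/andP: had.
Qed.

End TPart.
Section VPart.
Variables (R : realFieldType) (n d : nat).
Local Notation mp := {mpoly R[n]}.
Local Notation inT := (@in_T R n d).
Local Notation pwn := (@pw R n).
Hypothesis hn : (2 * d <= n)%N.

Lemma XG (i : 'I_n) a (G : mp) : (a <= d)%N -> symform (d - a) G ->
  inT ('X_i ^+ a * G).
Proof.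
move=> ad [sG hG]; case: a ad hG => [|a] ad hG.
  by rewrite expr0 mul1r; apply: inT_gen; left; split; rewrite // -(subn0 d).
have n1 : (1 < n)%N by lia.
pose i0 : 'I_n := Ordinal (ltnW n1); pose i1 : 'I_n := Ordinal n1.
have -> : 'X_i ^+ a.+1 * G = msym (tperm i0 i) ('X_i0 ^+ a.+1 * G).
  by rewrite msymM msymXn tpermL; move/issymP: sG => ->.
apply: inT_msym; apply: (@X0G _ _ _ i0 i1) => //; by split.
Qed.

Lemma V_GH a b (G H : mp) : (a <= d)%N -> (b <= d)%N ->
  symform (d - a) G -> symform (d - b) H ->
  spanP (@in_SigmaS' R n d) (G * H * pwn (a + b)).
Proof.
move=> ad bd hG hH; case: (hG) => sG dG; case: (hH) => sH dH.
pose u (i : 'I_n) := 'X_i ^+ a * G; pose v (i : 'I_n) := 'X_i ^+ b * H.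
pose Qs (c : R) := \sum_(i < n) (u i + c *: v i) ^+ 2.
have SQ c : in_SigmaS' d (Qs c).
  split; first split.
  - apply: sym_sumF => s i; rewrite rmorphXn /= msymD msymZ !msymM !msymXn.
    by move/issymP: sG => ->; move/issymP: sH => ->.
  - rewrite mulnC; apply: rpred_sum => i _; apply: dhomogMn; apply: rpredD.
      exact: XG_homog. by apply: rpredZ; exact: XG_homog.
  - exists [seq u i + c *: v i | i <- enum 'I_n]; split.
      move=> q /mapP [i _ ->]; apply: inTD; first exact: XG.
      by apply: inTZ; exact: XG.
    by rewrite big_map big_enum.
have E : Qs 1 - Qs (-1) = 4%:R *: (G * H * pwn (a + b)).
  rewrite /Qs /pw -sumrB mulr_sumr scaler_sumr; apply: eq_bigr => i _.
  rewrite scale1r scaleN1r scaler_nat /u /v exprD; ring.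
have -> : G * H * pwn (a + b) = (4%:R)^-1 *: (Qs 1 - Qs (-1)).
  by rewrite E scalerA mulVf ?scale1r // pnatr_eq0.
by apply: spanZ; apply: spanB; apply: span_gen.
Qed.

End VPart.
Lemma bins (r : seq nat) (K c1 c2 : nat) : all (fun x => x <= K)%N r ->
  (sumn r + K <= c1 + c2)%N ->
  exists s1 s2, [/\ perm_eq r (s1 ++ s2), (sumn s1 <= c1)%N & (sumn s2 <= c2)%N].
Proof.
elim: r c1 => [|x r IH] c1 /=.
  by move=> _ _; exists [::], [::].
move=> /andP [xK aK] hs.
case: (leqP x c1) => xc1.
  have [s1 [s2 [p h1 h2]]] := IH (c1 - x)%N aK ltac:(lia).
  exists (x :: s1), s2; split => //=; last by lia.
  by rewrite perm_cons.
exists [::], (x :: r); split => //=; lia.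
Qed.

Lemma max_in (s : seq nat) : s != [::] ->
  exists2 k, k \in s & all (fun x => x <= k)%N s.
Proof.
elim: s => [|x r IH] //= _.
case: (eqVneq r [::]) => [-> | /IH [k kr ak]].
  by exists x; rewrite ?inE ?eqxx //= leqnn.
case: (leqP x k) => xk.
  by exists k; rewrite ?inE ?kr ?orbT // xk.
exists x; first by rewrite inE eqxx.
rewrite leqnn /=; apply/allP => y yr; have := allP ak y yr; lia.
Qed.

Lemma greedy (s : seq nat) d : s != [::] -> sumn s = (2 * d)%N ->
  exists k s1 s2, [/\ perm_eq s (k :: s1 ++ s2), (sumn s1 <= d)%N & (sumn s2 <= d)%N].
Proof.
move=> ne ss; have [k ks ak] := max_in ne.
have pr := perm_to_rem ks.
have ar : all (fun x => x <= k)%N (rem k s).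
  by apply/allP => y /mem_rem yr; exact: (allP ak y yr).
have sr : (sumn (rem k s) + k)%N = (2 * d)%N.
  by rewrite -ss (perm_sumn pr) /= addnC.
have hb : (sumn (rem k s) + k <= d + d)%N by lia.
have [s1 [s2 [p h1 h2]]] := bins ar hb.
exists k, s1, s2; split => //.
by apply: perm_trans pr _; rewrite perm_cons.
Qed.

Section PPart.
Variables (R : realFieldType) (n : nat).
Local Notation mp := {mpoly R[n]}.
Local Notation pwn := (@pw R n).

Definition pp (s : seq nat) : mp := \prod_(k <- s) pwn k.

Lemma pp_cat s t : pp (s ++ t) = pp s * pp t.
Proof. by rewrite /pp big_cat. Qed.

Lemma pp_sym s : pp s \is symmetric.
Proof. by apply: rpred_prod => k _; apply: pw_sym. Qed.

Lemma pp_homog s : pp s \is (sumn s).-homog.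
Proof.
elim: s => [|k s IH]; first by rewrite /pp big_nil; apply: dhomog1.
by rewrite /pp big_cons; apply: dhomogM => //; apply: pw_homog.
Qed.

Definition PP w (g : mp) := exists s, sumn s = w /\ g = pp s.

Lemma PP_Sigma d g : (2 * d <= n)%N -> PP (2 * d) g -> spanP (@in_SigmaS' R n d) g.
Proof.
move=> hn [s [ss ->]].
case: (eqVneq s [::]) => [E | ne].
  subst s; have d0 : d = 0%N by move: ss => /= ; lia.
  subst d; apply: span_gen; split.
    by split; rewrite /pp big_nil ?rpred1 ?dhomog1.
  exists [:: 1]; split; last by rewrite big_seq1 expr1n /pp big_nil.
  move=> q; rewrite inE => /eqP ->; apply: inT_gen; left.
  by split; rewrite ?rpred1 ?dhomog1.
have [k [s1 [s2 [p h1 h2]]]] := greedy ne ss.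
have sk : (k + sumn s1 + sumn s2)%N = (2 * d)%N.
  by rewrite -ss (perm_sumn p) /= sumn_cat addnA.
have -> : pp s = pp s1 * pp s2 * pwn ((d - sumn s1) + (d - sumn s2)).
  rewrite /pp (perm_big _ p) /= big_cons big_cat /=.
  have -> : ((d - sumn s1) + (d - sumn s2))%N = k by lia.
  by rewrite mulrC.
apply: V_GH => //; try by rewrite leq_subr.
  by split; [apply: pp_sym | rewrite subKn //; apply: pp_homog].
by split; [apply: pp_sym | rewrite subKn //; apply: pp_homog].
Qed.

End PPart.
Section NPart.
Variables (R : realFieldType) (n : nat).
Local Notation mp := {mpoly R[n]}.
Local Notation pwn := (@pw R n).
Local Notation PPn := (@PP R n).
Local Notation ppn := (@pp R n).

Definition Pi (h : {set 'I_n}) : mp := \prod_(x in h) 'X_x.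
Definition Asum j i : mp :=
  \sum_(h : {set 'I_n} | #|h| == j) \sum_(l | l \notin h) Pi h * 'X_l ^+ i.
Definition Bsum j i : mp :=
  \sum_(h : {set 'I_n} | #|h| == j) \sum_(l in h) Pi h * 'X_l ^+ i.

Lemma L1 j i : mesym n R j * pwn i = Asum j i + Bsum j i.
Proof.
rewrite /mesym /Asum /Bsum mulr_suml -big_split /=; apply: eq_bigr => h _.
rewrite /pw mulr_sumr (bigID (fun l => l \in h)) /= addrC.
by [].
Qed.

Lemma L2 j i : Bsum j.+1 i = Asum j i.+1.
Proof.
rewrite /Asum /Bsum.
rewrite (exchange_big_dep (fun l => true)) //=.
rewrite [RHS](exchange_big_dep (fun l => true)) //=.
apply: eq_bigr => l _.
rewrite (reindex_onto (fun h => l |: h) (fun h => h :\ l)); last first.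
  by move=> h /andP [_ lh]; rewrite setD1K.
apply: eq_big => h.
  rewrite setU11 andbT cardsU1.
  case lh: (l \in h) => /=.
    rewrite andbF; apply/negbTE; apply/nandP; right; apply/negP => /eqP E.
    have : l \in (l |: h) :\ l by rewrite E.
    by rewrite setD11.
  by rewrite setU1K ?lh // eqxx andbT add1n eqSS.
move=> /andP [/andP [_ _] /eqP E].
have lh : l \notin h by rewrite -E setD11.
rewrite /Pi big_setU1 //= exprS; ring.
Qed.

Lemma L3 k : Bsum k 0 = k%:R *: mesym n R k.
Proof.
rewrite /Bsum /mesym scaler_sumr; apply: eq_bigr => h /eqP hk.
rewrite (eq_bigr (fun=> Pi h)); last by move=> l _; rewrite expr0 mulr1.
by rewrite sumr_const hk scaler_nat.
Qed.

Lemma A0 i : Asum 0 i = pwn i.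
Proof.
rewrite /Asum (big_pred1 set0); last first.
  by move=> h /=; rewrite cards_eq0.
rewrite /Pi big_set0 /pw; apply: eq_big => [l|l _]; by rewrite ?in_set0 ?mul1r.
Qed.

Lemma pp_PP s : PPn (sumn s) (ppn s).
Proof. by exists s. Qed.

Lemma spanPPM a b f g : spanP (PPn a) f -> spanP (PPn b) g -> spanP (PPn (a + b)) (f * g).
Proof.
apply: spanM => x y [s [<- ->]] [t [<- ->]]; apply: span_gen.
by exists (s ++ t); rewrite sumn_cat pp_cat.
Qed.

Lemma A_span j : forall i, spanP (PPn (j + i)) (Asum j i).
Proof.
elim: j => [|j IH] i.
  by rewrite A0 add0n; apply: span_gen; exists [:: i]; rewrite /pp big_seq1 /= addn0.
have E : Asum j.+1 i = (j.+1%:R)^-1 *: (Asum j 1 * pwn i) - Asum j i.+1.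
  have : mesym n R j.+1 = (j.+1%:R)^-1 *: Asum j 1.
    by rewrite -L2 L3 scalerA mulVf ?scale1r // pnatr_eq0.
  move=> Ee; have := L1 j.+1 i; rewrite Ee L2 -scalerAl => ->.
  by rewrite addrK.
rewrite E; apply: spanB.
  apply: spanZ; have -> : (j.+1 + i)%N = (j + 1 + i)%N by rewrite addn1.
  apply: spanPPM; first exact: IH.
  by apply: span_gen; exists [:: i]; rewrite /pp big_seq1 /= addn0.
by rewrite addSnnS; apply: IH.
Qed.

Lemma e_span k : spanP (PPn k) (mesym n R k).
Proof.
case: k => [|j].
  by rewrite mesym0E; apply: span_gen; exists [::]; rewrite /pp big_nil.
rewrite -[mesym n R j.+1]scale1r -(mulVf (_ : j.+1%:R != 0 :> R)) ?pnatr_eq0 //.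
rewrite -scalerA -L3 L2; apply: spanZ; rewrite -addn1; exact: A_span.
Qed.

End NPart.
Section FPart.
Variables (R : realFieldType) (n : nat).
Local Notation mp := {mpoly R[n]}.
Local Notation PPn := (@PP R n).
Local Notation ppn := (@pp R n).

Lemma spanX w (x : mp) k : spanP (PPn w) x -> spanP (PPn (w * k)) (x ^+ k).
Proof.
move=> hx; elim: k => [|k IH].
  by rewrite expr0 muln0; apply: span_gen; exists [::]; rewrite /pp big_nil.
by rewrite exprS mulnS; apply: spanPPM.
Qed.

Lemma span_prodI (r : seq 'I_n) (F : 'I_n -> mp) (w : 'I_n -> nat) :
  (forall i, spanP (PPn (w i)) (F i)) ->
  spanP (PPn (\sum_(i <- r) w i)) (\prod_(i <- r) F i).
Proof.
move=> H; elim: r => [|i r IH].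
  by rewrite !big_nil; apply: span_gen; exists [::]; rewrite /pp big_nil.
by rewrite !big_cons; apply: spanPPM.
Qed.

Lemma sym_span k (f : mp) : symform k f -> spanP (PPn k) f.
Proof.
move=> [sf hf]; have [t [tS th]] := sym_fundamental_homog sf hf.
rewrite -tS comp_mpolyEX; apply: span_sum => m mt; apply: spanZ.
rewrite comp_mpolyX.
have <- : mnmwgt m = k by move/dhomogP: th; apply.
rewrite /mnmwgt; apply: span_prodI => i.
rewrite tnth_mktuple mulnC; apply: spanX; exact: e_span.
Qed.

End FPart.

Theorem lemma5p2 (R : realFieldType) (n d : nat) :
  (2 * d <= n)%N ->
  full_dim_in_HS (2 * d) (@in_SigmaS' R n d).
Proof.
move=> hn f hf.
have := sym_span hf.
apply: span_trans => g hg; exact: PP_Sigma.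
Qed.
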